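(* Let $H$ be a CQG Hopf $*$-algebra. The Yetter–Drinfeld modules $(H,\rhd,\Delta_H)$ and $(\mathcal{I},\bar\rhd,\delta_{\mathcal{I}})$ (described in the context) are isomorphic in ${}_H\mathrm{YD}^H$ if and only if $H$ is of Kac type, i.e. its invariant state $\Phi_H$ is tracial ($\Phi_H(hk)=\Phi_H(kh)$ for all $h,k\in H$).
   Context: A CQG Hopf $*$-algebra is a complex Hopf algebra $(H,\Delta_H,\varepsilon_H,S_H)$ with an anti-linear involution making it a $*$-algebra with $\Delta_H$ a $*$-homomorphism, admitting a state $\Phi_H$ with $(\Phi_H\otimes\mathrm{id})\Delta_H(h)=\Phi_H(h)1=(\mathrm{id}\otimes\Phi_H)\Delta_H(h)$; $S_H$ is invertible. Sweedler notation $\Delta_H(h)=h_{(1)}\otimes h_{(2)}$. ${}_H\mathrm{YD}^H$ is the category of left $H$-modules $V$ with right $H$-comodule structure $v\mapsto v_{(0)}\otimes v_{(1)}$ such that $(hv)_{(0)}\otimes(hv)_{(1)}=h_{(2)}v_{(0)}\otimes h_{(3)}v_{(1)}S_H^{-1}(h_{(1)})$; morphisms are module and comodule maps. $H$ is an object via $h\rhd k=h_{(2)}kS_H^{-1}(h_{(1)})$ and $\Delta_H$. The restricted dual $\mathcal{I}=\{\Phi_H(a\,-):a\in H\}$ of linear functionals on $H$ is an algebra under convolution $(\omega\chi)(h)=(\omega\otimes\chi)\Delta_H(h)$; it carries the unique right $H$-comodule structure $\delta_{\mathcal{I}}(\omega)=\omega_{(0)}\otimes\omega_{(1)}$ with $\chi\omega=\chi(\omega_{(1)})\omega_{(0)}$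 for all $\chi\in\mathcal{I}$, and the left $H$-action $(h\,\bar\rhd\,\omega)(k)=\omega(S_H^{-1}(h_{(2)})kh_{(1)})$; with these, $\mathcal{I}\in{}_H\mathrm{YD}^H$. *)

(* Defs.v *)
From HB Require Import structures.
From mathcomp Require Import all_boot all_order all_algebra.
From mathcomp Require Import complex.
From mathcomp Require Import boolp functions reals.
From Stdlib Require List.
Set Implicit Arguments. Unset Strict Implicit. Unset Printing Implicit Defensive.
Import GRing.Theory Num.Theory.
Local Open Scope ring_scope.
Local Open Scope complex_scope.

(* Finite tensors.  An element of V (x) W is represented by a finite   *)
(* list of pairs (the Sweedler-style sum  sum_i v_i (x) w_i).  Two      *)
(* lists denote the same tensor iff every bilinear map agrees on them   *)
(* (universal property of the tensor product).                          *)
Section Tensors.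
Variable K : pzRingType.

Definition tsum (V W : Type) (U : nmodType) (B : V -> W -> U)
    (t : seq (V * W)) : U := \sum_(p <- t) B p.1 p.2.

Definition bilinear_map (V W U : lmodType K) (B : V -> W -> U) : Prop :=
  (forall v, linear (B v)) /\ (forall w, linear (fun v => B v w)).

Definition teq (V W : lmodType K) (t1 t2 : seq (V * W)) : Prop :=
  forall (U : lmodType K) (B : V -> W -> U),
    bilinear_map B -> tsum B t1 = tsum B t2.

Definition tsum3 (V W X : Type) (U : nmodType) (B : V -> W -> X -> U)
    (t : seq (V * W * X)) : U := \sum_(p <- t) B p.1.1 p.1.2 p.2.

Definition trilinear_map (V W X U : lmodType K) (B : V -> W -> X -> U) : Prop :=
  (forall v w, linear (B v w)) /\ (forall v x, linear (fun w => B v w x))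
  /\ (forall w x, linear (fun v => B v w x)).

Definition teq3 (V W X : lmodType K) (t1 t2 : seq (V * W * X)) : Prop :=
  forall (U : lmodType K) (B : V -> W -> X -> U),
    trilinear_map B -> tsum3 B t1 = tsum3 B t2.

Definition tscale (V : lmodType K) (W : Type) (a : K) (t : seq (V * W)) :=
  [seq (a *: p.1, p.2) | p <- t].

End Tensors.

(*   Delta h : Sweedler representation of Delta_H(h) in H (x) H       *)
Section CQG.
Variable R : realType.
Local Notation C := R[i].
Variable H : algType C.

Record is_CQG_Hopf_star (Delta : H -> seq (H * H)) (eps : H -> C)
  (S Sinv : H -> H) (star : H -> H) (Phi : H -> C) : Prop := {
  Delta_lin : forall (a : C) h k,
    teq (Delta (a *: h + k)) (tscale a (Delta h) ++ Delta k);
  Delta_mul : forall h k,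
    teq (Delta (h * k)) [seq (p.1 * q.1, p.2 * q.2) | p <- Delta h, q <- Delta k];
  Delta_one : teq (Delta 1) [:: (1, 1)];
  Delta_coassoc : forall h,
    teq3 [seq (q.1, q.2, p.2) | p <- Delta h, q <- Delta p.1]
         [seq (p.1, q.1, q.2) | p <- Delta h, q <- Delta p.2];
  eps_lin : forall (a : C) h k, eps (a *: h + k) = a * eps h + eps k;
  eps_mul : forall h k, eps (h * k) = eps h * eps k;
  eps_one : eps 1 = 1;
  counit_l : forall h, \sum_(p <- Delta h) eps p.1 *: p.2 = h;
  counit_r : forall h, \sum_(p <- Delta h) eps p.2 *: p.1 = h;
  S_lin : forall (a : C) h k, S (a *: h + k) = a *: S h + S k;
  antipode_l : forall h, \sum_(p <- Delta h) S p.1 * p.2 = eps h *: 1;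
  antipode_r : forall h, \sum_(p <- Delta h) p.1 * S p.2 = eps h *: 1;
  SK : cancel S Sinv;
  SinvK : cancel Sinv S;
  star_antilin : forall (a : C) h k, star (a *: h + k) = a^* *: star h + star k;
  star_mul : forall h k, star (h * k) = star k * star h;
  star_invol : involutive star;
  Delta_star : forall h,
    teq (Delta (star h)) [seq (star p.1, star p.2) | p <- Delta h];
  Phi_lin : forall (a : C) h k, Phi (a *: h + k) = a * Phi h + Phi k;
  Phi_one : Phi 1 = 1;
  Phi_pos : forall h, 0 <= Phi (star h * h);
  Phi_inv_l : forall h, \sum_(p <- Delta h) Phi p.1 *: p.2 = Phi h *: 1;
  Phi_inv_r : forall h, \sum_(p <- Delta h) Phi p.2 *: p.1 = Phi h *: 1
}.

Definition tracial (Phi : H -> C) : Prop :=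
  forall h k, Phi (h * k) = Phi (k * h).

(* the space of (all) functions H -> C, a C-vector space;
   the restricted dual I is the subset of the Phi(a -) *)
Definition Hfun := H -> C^o.

Definition inI (Phi : H -> C) (w : Hfun) : Prop :=
  exists a : H, w = (fun x => Phi (a * x)).

Definition conv (Delta : H -> seq (H * H)) (w chi : Hfun) : Hfun :=
  fun h => \sum_(p <- Delta h) w p.1 * chi p.2.

(* deltaI is the right H-comodule structure of I:
   deltaI(w) in I (x) H and chi w = chi(w_(1)) w_(0) for all chi in I *)
Definition is_deltaI (Delta : H -> seq (H * H)) (Phi : H -> C)
    (deltaI : Hfun -> seq (Hfun * H)) : Prop :=
  forall w, inI Phi w ->
    (forall p, List.In p (deltaI w) -> inI Phi p.1) /\
    (forall chi, inI Phi chi ->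
       conv Delta chi w = \sum_(p <- deltaI w) chi p.2 *: p.1).

Definition actH (Delta : H -> seq (H * H)) (Sinv : H -> H) (h k : H) : H :=
  \sum_(p <- Delta h) p.2 * k * Sinv p.1.

Definition actI (Delta : H -> seq (H * H)) (Sinv : H -> H) (h : H) (w : Hfun)
  : Hfun := fun k => \sum_(p <- Delta h) w (Sinv p.2 * k * p.1).

Definition YD_mor_HI (Delta : H -> seq (H * H)) (Sinv : H -> H) (Phi : H -> C)
    (deltaI : Hfun -> seq (Hfun * H)) (F : H -> Hfun) : Prop :=
  [/\ forall h, inI Phi (F h),
      forall (a : C) h k, F (a *: h + k) = a *: F h + F k,
      forall h k, F (actH Delta Sinv h k) = actI Delta Sinv h (F k)
    & forall h, teq (deltaI (F h)) [seq (F p.1, p.2) | p <- Delta h]].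

Definition YD_mor_IH (Delta : H -> seq (H * H)) (Sinv : H -> H) (Phi : H -> C)
    (deltaI : Hfun -> seq (Hfun * H)) (G : Hfun -> H) : Prop :=
  [/\ forall (a : C) w1 w2, inI Phi w1 -> inI Phi w2 ->
        G (a *: w1 + w2) = a *: G w1 + G w2,
      forall h w, inI Phi w -> G (actI Delta Sinv h w) = actH Delta Sinv h (G w)
    & forall w, inI Phi w -> teq (Delta (G w)) [seq (G p.1, p.2) | p <- deltaI w]].

Definition YD_isomorphic (Delta : H -> seq (H * H)) (Sinv : H -> H)
    (Phi : H -> C) (deltaI : Hfun -> seq (Hfun * H)) : Prop :=
  exists (F : H -> Hfun) (G : Hfun -> H),
    [/\ YD_mor_HI Delta Sinv Phi deltaI F, YD_mor_IH Delta Sinv Phi deltaI G,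
        forall h, G (F h) = h
      & forall w, inI Phi w -> F (G w) = w].

End CQG.

(* Main.v *)
Require Import Defs.
From HB Require Import structures.
From mathcomp Require Import all_boot all_order all_algebra.
From mathcomp Require Import complex.
From mathcomp Require Import boolp functions reals.
From mathcomp Require Import ring lra.
Set Implicit Arguments. Unset Strict Implicit. Unset Printing Implicit Defensive.
Import GRing.Theory Num.Theory.
Local Open Scope ring_scope.
Local Open Scope complex_scope.

(* Proof outline:
   - Sweedler calculus for the list-represented coproduct (sw, teq/teq3 consequences);
   - S is antimultiplicative; inverse-antipode identities;
   - strong invariance identities and a finite linear-algebra lemma (LA_thm)
     giving faithfulness of Phi (right kernel) and Phi o S = Phi;
   - (=>) an isomorphism forces Phi to be invariant under the action on I,
     hence Phi(ab) = Phi(b S^2 a), S^4 = id, and positivity gives S^2 = id, so Phi is tracial;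
   - (<=) traciality gives S^2 = id and F k = Phi(S k -) is a YD isomorphism. *)


Section LinGen.
Variable R : realType.
Local Notation C := R[i].
Implicit Types U V W : lmodType C.

Lemma lin0 U V (f : U -> V) : linear f -> f 0 = 0.
Proof. by move=> lf; have := lf 1 0 0; rewrite !scale1r addr0 => h; apply: (addrI (f 0)); rewrite addr0 -h. Qed.

Lemma linD U V (f : U -> V) x y : linear f -> f (x + y) = f x + f y.
Proof. by move=> lf; have := lf 1 x y; rewrite !scale1r. Qed.

Lemma linZ U V (f : U -> V) a x : linear f -> f (a *: x) = a *: f x.
Proof. by move=> lf; rewrite -[a *: x]addr0 lf (lin0 lf) addr0. Qed.

Lemma linN U V (f : U -> V) x : linear f -> f (- x) = - f x.
Proof. by move=> lf; rewrite -scaleN1r linZ // scaleN1r. Qed.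

Lemma linB U V (f : U -> V) x y : linear f -> f (x - y) = f x - f y.
Proof. by move=> lf; rewrite linD // linN. Qed.

Lemma lin_sum U V I (r : seq I) (F : I -> U) (f : U -> V) :
  linear f -> f (\sum_(i <- r) F i) = \sum_(i <- r) f (F i).
Proof.
move=> lf; elim: r => [|x r IH]; first by rewrite !big_nil lin0.
by rewrite !big_cons linD // IH.
Qed.

Lemma lin_id U : linear (fun x : U => x).
Proof. by []. Qed.

Lemma lin_cst0 U V : linear (fun _ : U => (0 : V)).
Proof. by move=> a x y; rewrite scaler0 addr0. Qed.

Lemma lin_comp U V W (f : V -> W) (g : U -> V) :
  linear f -> linear g -> linear (fun x => f (g x)).
Proof. by move=> lf lg a x y; rewrite lg lf. Qed.

Lemma lin_add U V (f g : U -> V) :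
  linear f -> linear g -> linear (fun x => f x + g x).
Proof. by move=> lf lg a x y; rewrite lf lg scalerDr addrACA. Qed.

Lemma lin_opp U V (f : U -> V) : linear f -> linear (fun x => - f x).
Proof. by move=> lf a x y; rewrite lf opprD scalerN. Qed.

Lemma lin_sumf U V I (r : seq I) (F : I -> U -> V) :
  (forall i, linear (F i)) -> linear (fun x => \sum_(i <- r) F i x).
Proof.
move=> lF a x y; rewrite scaler_sumr -big_split /=.
by apply: eq_bigr => i _; rewrite lF.
Qed.

Lemma lin_scal U V (k : C) (f : U -> V) : linear f -> linear (fun x => k *: f x).
Proof. by move=> lf a x y; rewrite lf scalerDr !scalerA mulrC. Qed.

Lemma lin_scalv U V (f : U -> C^o) (v : V) : linear f -> linear (fun x => f x *: v).
Proof. by move=> lf a x y; rewrite lf scalerDl scalerA. Qed.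

Lemma lin_mulCl U (k : C) (f : U -> C^o) : linear f -> linear (fun x => (k * f x : C^o)).
Proof. by move=> lf a x y; rewrite lf mulrDr scalerAr. Qed.

Lemma lin_mulCr U (k : C) (f : U -> C^o) : linear f -> linear (fun x => (f x * k : C^o)).
Proof. by move=> lf a x y; rewrite lf mulrDl scalerAl. Qed.

Lemma lin_app U V (f : U -> V -> C^o) (v : V) : linear f -> linear (fun x => f x v).
Proof. by move=> lf a x y; rewrite lf. Qed.

End LinGen.

Section Alg.
Variable R : realType.
Local Notation C := R[i].
Variable H : algType C.
Implicit Types U V W : lmodType C.

Lemma lin_mull U (c : H) (f : U -> H) : linear f -> linear (fun x => c * f x).
Proof. by move=> lf a x y; rewrite lf mulrDr scalerAr. Qed.

Lemma lin_mulr U (c : H) (f : U -> H) : linear f -> linear (fun x => f x * c).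
Proof. by move=> lf a x y; rewrite lf mulrDl scalerAl. Qed.
End Alg.


Section Hopf.
Variable R : realType.
Local Notation C := R[i].
Variable H : algType C.
Variables (Delta : H -> seq (H * H)) (eps : H -> C) (S Sinv star : H -> H) (Phi : H -> C).
Hypothesis hH : is_CQG_Hopf_star Delta eps S Sinv star Phi.
Implicit Types U V : lmodType C.

Definition swd (U : lmodType C) (h : H) (g : H -> H -> U) : U :=
  \sum_(p <- Delta h) g p.1 p.2.
Local Notation sw := swd.

Lemma linS : linear S.
Proof. by move=> a x y; rewrite (S_lin hH). Qed.
Lemma linPhi : linear (Phi : H -> C^o).
Proof. by move=> a x y; rewrite (Phi_lin hH). Qed.
Lemma lineps : linear (eps : H -> C^o).
Proof. by move=> a x y; rewrite (eps_lin hH). Qed.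

Lemma lin_S U (g : U -> H) : linear g -> linear (fun x => S (g x)).
Proof. by move=> lg; apply: (lin_comp (f := S)) lg; apply: linS. Qed.
Lemma lin_Phi U (g : U -> H) : linear g -> linear (fun x => (Phi (g x) : C^o)).
Proof. by move=> lg; apply: (lin_comp (f := (Phi : H -> C^o))) lg; apply: linPhi. Qed.
Lemma lin_eps U (g : U -> H) : linear g -> linear (fun x => (eps (g x) : C^o)).
Proof. by move=> lg; apply: (lin_comp (f := (eps : H -> C^o))) lg; apply: lineps. Qed.

Lemma sw_lin U (g : H -> H -> U) : bilinear_map g -> linear (fun h => sw h g).
Proof.
move=> bg a h k; rewrite /swd.
have := Delta_lin hH a h k bg; rewrite /tsum big_cat big_map /= => ->.
congr (_ + _); rewrite scaler_sumr; apply: eq_bigr => p _.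
by rewrite (linZ _ _ (bg.2 p.2)).
Qed.

Lemma lin_swf U V (g : H -> H -> U) (f : V -> H) :
  bilinear_map g -> linear f -> linear (fun x => sw (f x) g).
Proof. by move=> bg lf; apply: (lin_comp (f := fun h => sw h g)) lf; apply: sw_lin. Qed.

Lemma lin_swg U V (h : H) (G : H -> H -> V -> U) :
  (forall a b, linear (G a b)) -> linear (fun x => sw h (fun a b => G a b x)).
Proof. by move=> lG; rewrite /swd; apply: lin_sumf => p; apply: lG. Qed.

Lemma sw_ext U h (g g' : H -> H -> U) : (forall a b, g a b = g' a b) -> sw h g = sw h g'.
Proof. by move=> e; apply: eq_bigr => p _; rewrite e. Qed.

Lemma sw_f U V (g : H -> H -> U) (f : U -> V) h : linear f ->
  f (sw h g) = sw h (fun a b => f (g a b)).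
Proof. by move=> lf; rewrite /swd lin_sum. Qed.

Lemma sw_scale U h (g : H -> H -> U) k : k *: sw h g = sw h (fun a b => k *: g a b).
Proof. by rewrite /swd scaler_sumr. Qed.

Lemma sw_exch U h k (g : H -> H -> H -> H -> U) :
  sw h (fun a b => sw k (fun c d => g a b c d)) = sw k (fun c d => sw h (fun a b => g a b c d)).
Proof. by rewrite /swd exchange_big. Qed.

Lemma sw_mul U (g : H -> H -> U) h k : bilinear_map g ->
  sw (h * k) g = sw h (fun a b => sw k (fun c d => g (a * c) (b * d))).
Proof.
move=> bg; rewrite /swd; have := Delta_mul hH h k bg.
by rewrite /tsum big_allpairs_dep /= => ->.
Qed.

Lemma sw_one U (g : H -> H -> U) : bilinear_map g -> sw 1 g = g 1 1.
Proof.
move=> bg; rewrite /swd; have := Delta_one hH bg.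
by rewrite /tsum big_cons big_nil addr0 /= => ->.
Qed.

Lemma sw_coassoc U (g : H -> H -> H -> U) h : trilinear_map g ->
  sw h (fun a b => sw a (fun c d => g c d b)) = sw h (fun a b => sw b (fun c d => g a c d)).
Proof.
move=> tg; rewrite /swd; have := Delta_coassoc hH h tg.
by rewrite /tsum3 !big_allpairs_dep /=.
Qed.

Lemma counitL U (f : H -> U) h : linear f -> sw h (fun a b => eps a *: f b) = f h.
Proof.
move=> lf; rewrite -{2}(counit_l hH h) lin_sum //.
by apply: eq_bigr => p _; rewrite linZ.
Qed.

Lemma counitR U (f : H -> U) h : linear f -> sw h (fun a b => eps b *: f a) = f h.
Proof.
move=> lf; rewrite -{2}(counit_r hH h) lin_sum //.
by apply: eq_bigr => p _; rewrite linZ.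
Qed.

Lemma antipodeL U (f : H -> U) h : linear f -> sw h (fun a b => f (S a * b)) = eps h *: f 1.
Proof. by move=> lf; rewrite -linZ // -(antipode_l hH h) lin_sum. Qed.

Lemma antipodeR U (f : H -> U) h : linear f -> sw h (fun a b => f (a * S b)) = eps h *: f 1.
Proof. by move=> lf; rewrite -linZ // -(antipode_r hH h) lin_sum. Qed.

Lemma PhiinvL U (f : H -> U) h : linear f -> sw h (fun a b => Phi a *: f b) = Phi h *: f 1.
Proof.
move=> lf; rewrite -linZ // -(Phi_inv_l hH h) lin_sum //.
by apply: eq_bigr => p _; rewrite linZ.
Qed.

Lemma PhiinvR U (f : H -> U) h : linear f -> sw h (fun a b => Phi b *: f a) = Phi h *: f 1.
Proof.
move=> lf; rewrite -linZ // -(Phi_inv_r hH h) lin_sum //.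
by apply: eq_bigr => p _; rewrite linZ.
Qed.

Lemma linSinv : linear Sinv.
Proof.
move=> a x y; apply: (can_inj (SK hH)); rewrite (SinvK hH) (S_lin hH) !(SinvK hH).
by [].
Qed.
Lemma lin_Sinv U (g : U -> H) : linear g -> linear (fun x => Sinv (g x)).
Proof. by move=> lg; apply: (lin_comp (f := Sinv)) lg; apply: linSinv. Qed.

End Hopf.

Ltac linsolve_with hH := repeat first [
    apply: lin_id | apply: lin_cst0
  | match goal with
    | |- bilinear_map _ => split => ? /=
    | |- trilinear_map _ => split; [|split] => ? ? /=
    end
  | apply: lin_add | apply: lin_opp
  | apply: lin_swg => ? ? /=
  | apply: (lin_swf _ hH)
  | apply: lin_sumf => ? /=
  | apply: lin_scal | apply: lin_scalv
  | apply: lin_mull | apply: lin_mulr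
  | apply: lin_mulCl | apply: lin_mulCr
  | apply: (lin_S hH) | apply: (lin_Phi hH) | apply: (lin_eps hH) | apply: (lin_Sinv hH)
  | (apply: lin_comp; first eassumption) ].

Ltac swext := repeat (apply: sw_ext => ? ? /=).


Section Hopf2.
Variable R : realType.
Local Notation C := R[i].
Variable H : algType C.
Variables (Delta : H -> seq (H * H)) (eps : H -> C) (S Sinv star : H -> H) (Phi : H -> C).
Hypothesis hH : is_CQG_Hopf_star Delta eps S Sinv star Phi.
Implicit Types U V : lmodType C.
Local Notation sw := (swd Delta).

Ltac linsolve_old := repeat first [
    apply: lin_id | apply: lin_cst0
  | match goal with
    | |- bilinear_map _ => split => ? /=
    | |- trilinear_map _ => split; [|split] => ? ? /=
    end
  | apply: lin_add | apply: lin_opp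
  | apply: lin_swg => ? ? /=
  | apply: (lin_swf Delta hH)
  | apply: lin_sumf => ? /=
  | apply: lin_scal | apply: lin_scalv
  | apply: lin_mull | apply: lin_mulr
  | apply: lin_mulCl | apply: lin_mulCr
  | apply: (lin_S hH) | apply: (lin_Phi hH) | apply: (lin_eps hH)
  | (apply: lin_comp; first eassumption) ].

Ltac linsolve := linsolve_with hH.

Lemma antipode_mul2 U (f : H -> U) x y : linear f ->
  sw x (fun a2 a3 => sw y (fun b2 b3 => f ((a2 * b2) * S (a3 * b3)))) = (eps x * eps y) *: f 1.
Proof.
move=> lf; rewrite -(sw_mul hH (g := fun p q => f (p * S q))); last by linsolve.
by rewrite (antipodeR hH) // (eps_mul hH).
Qed.

Lemma S_mul a b : S (a * b) = S b * S a.
Proof.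
pose G a1 a2 a3 := sw b (fun b1 b' => sw b' (fun b2 b3 => S b1 * S a1 * ((a2 * b2) * S (a3 * b3)))).
transitivity (sw a (fun a1 a' => sw a' (fun a2 a3 => G a1 a2 a3))); last first.
  rewrite /G; under sw_ext => a1 a' do rewrite sw_exch.
  transitivity (sw a (fun a1 a' => sw b (fun b1 b' => (eps a' * eps b') *: (S b1 * S a1)))).
    by swext; rewrite (antipode_mul2 (f := fun z => S _ * S _ * z)) ?mulr1 //; linsolve.
  transitivity (sw a (fun a1 a' => eps a' *: (S b * S a1))).
    swext; rewrite -(counitR hH (f := fun b1 => S b1 * S _)); last by linsolve.
    by rewrite sw_scale; swext; rewrite scalerA mulrC.
  by rewrite (counitR hH (f := fun a1 => S b * S a1)) //; linsolve.
symmetry; rewrite -(sw_coassoc hH (g := G)); last by rewrite /G; linsolve.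
transitivity (sw a (fun a'' a3 => eps a'' *: sw b (fun b1 b' => sw b' (fun b2 b3 => S b1 * b2 * S (a3 * b3))))).
  apply: sw_ext => a'' a3.
  pose F y := sw b (fun b1 b' => sw b' (fun b2 b3 => S b1 * (y * b2) * S (a3 * b3))).
  transitivity (sw a'' (fun a1 a2 => F (S a1 * a2))).
    by rewrite /G /F; swext; rewrite !mulrA.
  rewrite (antipodeL hH); last by rewrite /F; linsolve.
  by congr (_ *: _); rewrite /F; swext; rewrite mul1r.
transitivity (sw b (fun b1 b' => sw b' (fun b2 b3 => S b1 * b2 * S (a * b3)))).
  by rewrite (counitL hH (f := fun a3 => sw b (fun b1 b' => sw b' (fun b2 b3 => S b1 * b2 * S (a3 * b3))))) //; linsolve.
rewrite -(sw_coassoc hH (g := fun b1 b2 b3 => S b1 * b2 * S (a * b3))); last by linsolve.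
transitivity (sw b (fun b'' b3 => eps b'' *: S (a * b3))).
  by swext; rewrite (antipodeL hH (f := fun y => y * S (_ * _))) ?mul1r //; linsolve.
by rewrite (counitL hH (f := fun b3 => S (a * b3))) //; linsolve.
Qed.

Lemma S1 : S 1 = 1.
Proof.
have := antipode_l hH 1; rewrite (eps_one hH) scale1r.
have -> : \sum_(p <- Delta 1) S p.1 * p.2 = sw 1 (fun a b => S a * b) by [].
by rewrite (sw_one hH) ?mulr1 //; linsolve.
Qed.

End Hopf2.


Section LA.
Variable R : realType.
Local Notation C := R[i].
Variables (V W U : lmodType C).
Variable P : V -> Prop.
Hypothesis P0 : P 0.
Hypothesis PC : forall a u u', P u -> P u' -> P (a *: u + u').
Variable T : (W -> C^o) -> Prop.
Hypothesis Tlin : forall t, T t -> linear t.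
Variable B : V -> W -> U.
Hypothesis hB1 : forall w a u u', P u -> P u' -> B (a *: u + u') w = a *: B u w + B u' w.
Hypothesis hB2 : forall u, linear (B u).
Hypothesis hB3 : forall u w, P u -> (forall t, T t -> t w = 0) -> B u w = 0.

Lemma B0 w : B 0 w = 0.
Proof.
have := hB1 w 1 P0 P0; rewrite !scale1r addr0 => h.
by apply: (addrI (B 0 w)); rewrite addr0 -h.
Qed.

Lemma P_sum (L : seq (V * W)) (beta : V * W -> C) :
  (forall p, List.In p L -> P p.1) -> P (\sum_(p <- L) beta p *: p.1).
Proof.
elim: L => [|p L IH] HL; first by rewrite big_nil.
rewrite big_cons; apply: PC; first by apply: HL; left.
by apply: IH => q Hq; apply: HL; right.
Qed.

Lemma B_sum (L : seq (V * W)) (beta : V * W -> C) w :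
  (forall p, List.In p L -> P p.1) ->
  B (\sum_(p <- L) beta p *: p.1) w = \sum_(p <- L) beta p *: B p.1 w.
Proof.
elim: L => [|p L IH] HL; first by rewrite !big_nil B0.
have HL' : forall q, List.In q L -> P q.1 by move=> q Hq; apply: HL; right.
rewrite !big_cons hB1 ?IH //; first by apply: HL; left.
exact: P_sum.
Qed.

Definition tcond (L : seq (V * W)) :=
  forall t, T t -> \sum_(p <- L) t p.2 *: p.1 = 0.

Lemma LA_main n (L : seq (V * W)) : (size L <= n)%N ->
  (forall p, List.In p L -> P p.1) -> tcond L -> \sum_(p <- L) B p.1 p.2 = 0.
Proof.
elim: n L => [|n IH] [|[u w] L] //=; rewrite ?big_nil // ltnS => sL HL hc.
have Pu : P u by apply: (HL (u, w)); left.
have HL' : forall q, List.In q L -> P q.1 by move=> q Hq; apply: HL; right.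
rewrite big_cons /=.
case: (pselect (exists beta : V * W -> C, u = \sum_(p <- L) beta p *: p.1)) => [[beta eu]|nsp].
  pose L2 := [seq (p.1, p.2 + beta p *: w) | p <- L].
  have HL2 : forall q, List.In q L2 -> P q.1.
    move=> q /List.in_map_iff [p [<- Hp]] /=; exact: HL'.
  have hc2 : tcond L2.
    move=> t Tt; rewrite /L2 big_map /=.
    have := hc t Tt; rewrite big_cons /= eu scaler_sumr -big_split /= => e.
    rewrite -[RHS]e; apply: eq_bigr => p _.
    by rewrite (linD _ _ (Tlin Tt)) (linZ _ _ (Tlin Tt)) scalerDl scalerA mulrC addrC.
  have := IH L2; rewrite {1}/L2 size_map => /(_ sL HL2 hc2).
  rewrite /L2 big_map /=.
  have -> : \sum_(p <- L) B p.1 (p.2 + beta p *: w) =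
            \sum_(p <- L) B p.1 p.2 + B u w.
    rewrite eu B_sum // -big_split /=; apply: eq_bigr => p _.
    by rewrite (linD _ _ (hB2 _)) (linZ _ _ (hB2 _)).
  by rewrite addrC.
have tw : forall t, T t -> t w = 0.
  move=> t Tt; apply/eqP/negPn/negP => nz; apply: nsp.
  exists (fun p => - (t w)^-1 * t p.2).
  have := hc t Tt; rewrite big_cons /= => /eqP; rewrite addr_eq0 => /eqP e.
  rewrite -[u](scalerK nz) e scalerN scaler_sumr -sumrN.
  by apply: eq_bigr => p _; rewrite scalerA mulNr scaleNr.
rewrite (hB3 Pu tw) add0r (IH L) //.
move=> t Tt; have := hc t Tt; rewrite big_cons /= tw // scale0r add0r //.
Qed.

End LA.

Lemma LA_thm (R : realType) (V W U : lmodType R[i]) (P : V -> Prop) (T : (W -> R[i]^o) -> Prop)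
  (B : V -> W -> U) (L : seq (V * W)) :
  P 0 -> (forall a u u', P u -> P u' -> P (a *: u + u')) ->
  (forall t, T t -> linear t) ->
  (forall w a u u', P u -> P u' -> B (a *: u + u') w = a *: B u w + B u' w) ->
  (forall u, linear (B u)) ->
  (forall u w, P u -> (forall t, T t -> t w = 0) -> B u w = 0) ->
  (forall p, List.In p L -> P p.1) ->
  (forall t, T t -> \sum_(p <- L) t p.2 *: p.1 = 0) ->
  \sum_(p <- L) B p.1 p.2 = 0.
Proof. by move=> *; apply: (@LA_main _ _ _ _ P _ _ T) => //; apply: leqnn. Qed.


Section Hopf4.
Variable R : realType.
Local Notation C := R[i].
Variable H : algType C.
Variables (Delta : H -> seq (H * H)) (eps : H -> C) (S Sinv star : H -> H) (Phi : H -> C).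
Hypothesis hH : is_CQG_Hopf_star Delta eps S Sinv star Phi.
Implicit Types U V : lmodType C.
Local Notation sw := (swd Delta).
Ltac linsolve := linsolve_with hH.

Lemma Sinv_mul a b : Sinv (a * b) = Sinv b * Sinv a.
Proof. by apply: (can_inj (SK hH)); rewrite (SinvK hH) (S_mul hH) !(SinvK hH). Qed.

Lemma Sinv1 : Sinv 1 = 1.
Proof. by rewrite -{1}(S1 hH) (SK hH). Qed.

Lemma antipodeInvL U (f : H -> U) h : linear f ->
  sw h (fun a b => f (b * Sinv a)) = eps h *: f 1.
Proof.
move=> lf.
have e : sw h (fun a b => b * Sinv a) = eps h *: 1.
  apply: (can_inj (SK hH)); rewrite (sw_f Delta _ _ (linS hH)).
  rewrite (linZ _ _ (linS hH)) (S1 hH) -(antipodeR hH (f := id)) //.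
  by swext; rewrite (S_mul hH) (SinvK hH).
by rewrite -(sw_f Delta _ _ lf) e linZ.
Qed.

Lemma antipodeInvR U (f : H -> U) h : linear f ->
  sw h (fun a b => f (Sinv b * a)) = eps h *: f 1.
Proof.
move=> lf.
have e : sw h (fun a b => Sinv b * a) = eps h *: 1.
  apply: (can_inj (SK hH)); rewrite (sw_f Delta _ _ (linS hH)).
  rewrite (linZ _ _ (linS hH)) (S1 hH) -(antipodeL hH (f := id)) //.
  by swext; rewrite (S_mul hH) (SinvK hH).
by rewrite -(sw_f Delta _ _ lf) e linZ.
Qed.

Lemma strong1 b c :
  sw c (fun c1 c2 => Phi (b * c2) *: c1) = sw b (fun b1 b2 => Phi (b2 * c) *: S b1).
Proof.
symmetry.
transitivity (sw b (fun b1 b2 => sw (b2 * c) (fun p q => Phi q *: (S b1 * p)))).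
  apply: sw_ext => b1 b2 /=.
  by rewrite (PhiinvR hH (f := fun x => S b1 * x)) ?mulr1 //; linsolve.
transitivity (sw b (fun b1 b2 => sw b2 (fun x y => sw c (fun c1 c2 => Phi (y * c2) *: (S b1 * (x * c1)))))).
  apply: sw_ext => b1 b2 /=.
  by rewrite (sw_mul hH (g := fun p q => Phi q *: (S b1 * p))) //; linsolve.
rewrite -(sw_coassoc hH (g := fun b1 x y => sw c (fun c1 c2 => Phi (y * c2) *: (S b1 * (x * c1))))); last by linsolve.
transitivity (sw b (fun b' y => eps b' *: sw c (fun c1 c2 => Phi (y * c2) *: c1))).
  apply: sw_ext => b' y /=.
  transitivity (sw b' (fun b1 x => (fun z => sw c (fun c1 c2 => Phi (y * c2) *: (z * c1))) (S b1 * x))).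
    by swext; rewrite mulrA.
  rewrite (antipodeL hH (f := fun z => sw c (fun c1 c2 => Phi (y * c2) *: (z * c1)))); last by linsolve.
  by congr (_ *: _); swext; rewrite mul1r.
by rewrite (counitL hH (f := fun y => sw c (fun c1 c2 => Phi (y * c2) *: c1))) //; linsolve.
Qed.

Lemma strong2 a b :
  sw a (fun a1 a2 => Phi (a2 * b) *: a1) = sw b (fun b1 b2 => Phi (a * b2) *: Sinv b1).
Proof.
symmetry.
transitivity (sw b (fun b1 b2 => sw (a * b2) (fun p q => Phi q *: (p * Sinv b1)))).
  apply: sw_ext => b1 b2 /=.
  by rewrite (PhiinvR hH (f := fun x => x * Sinv b1)) ?mul1r //; linsolve.
transitivity (sw b (fun b1 b2 => sw b2 (fun x y => sw a (fun a1 a2 => Phi (a2 * y) *: (a1 * x * Sinv b1))))).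
  apply: sw_ext => b1 b2 /=.
  rewrite (sw_mul hH (g := fun p q => Phi q *: (p * Sinv b1))); last by linsolve.
  by rewrite sw_exch.
rewrite -(sw_coassoc hH (g := fun b1 x y => sw a (fun a1 a2 => Phi (a2 * y) *: (a1 * x * Sinv b1)))); last by linsolve.
transitivity (sw b (fun b' y => eps b' *: sw a (fun a1 a2 => Phi (a2 * y) *: a1))).
  apply: sw_ext => b' y /=.
  transitivity (sw b' (fun b1 x => (fun z => sw a (fun a1 a2 => Phi (a2 * y) *: (a1 * z))) (x * Sinv b1))).
    by swext; rewrite mulrA.
  rewrite (antipodeInvL (f := fun z => sw a (fun a1 a2 => Phi (a2 * y) *: (a1 * z)))); last by linsolve.
  by congr (_ *: _); swext; rewrite mulr1.
by rewrite (counitL hH (f := fun y => sw a (fun a1 a2 => Phi (a2 * y) *: a1))) //; linsolve.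
Qed.

End Hopf4.


Section Hopf5.
Variable R : realType.
Local Notation C := R[i].
Variable H : algType C.
Variables (Delta : H -> seq (H * H)) (eps : H -> C) (S Sinv star : H -> H) (Phi : H -> C).
Hypothesis hH : is_CQG_Hopf_star Delta eps S Sinv star Phi.
Implicit Types U V : lmodType C.
Local Notation sw := (swd Delta).
Ltac linsolve := linsolve_with hH.

Definition Tphi (t : H -> C^o) := exists b, t = fun w => Phi (b * w).

Lemma Tphi_lin t : Tphi t -> linear t.
Proof. by move=> [b ->]; linsolve. Qed.

Lemma kerN_sw c : (forall x, Phi (x * c) = 0) ->
  forall t, Tphi t -> \sum_(p <- Delta c) t p.2 *: p.1 = 0.
Proof.
move=> hc t [b ->].
have := strong1 hH b c; rewrite /swd => ->.
by rewrite big1 // => p _; rewrite hc scale0r.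
Qed.

Lemma Phi1 : Phi 1 = 1.
Proof. exact: (Phi_one hH). Qed.

Lemma epsN c : (forall x, Phi (x * c) = 0) -> eps c = 0.
Proof.
move=> hc.
have e : \sum_(p <- Delta c) (Phi (S p.1 * p.2) : C^o) = 0.
  apply: (@LA_thm R H H C^o (fun _ => True) Tphi (fun u w => (Phi (S u * w) : C^o))) => //.
  - by move=> *; apply: Tphi_lin.
  - move=> w a u u' _ _.
    have l : linear (fun u => (Phi (S u * w) : C^o)) by linsolve.
    exact: l.
  - by move=> u /=; linsolve.
  - by move=> u w _ hw; exact: (hw (fun w => Phi (S u * w)) (ex_intro _ (S u) erefl)).
  - exact: kerN_sw.
have := antipode_l hH c.
move=> /(congr1 Phi); rewrite -[eps c *: 1]addr0 (Phi_lin hH (eps c) 1 0) Phi1 mulr1.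
have -> : Phi 0 = 0 by rewrite (lin0 (linPhi hH)).
rewrite addr0 => <-.
by rewrite (lin_sum _ _ (linPhi hH)).
Qed.

Lemma faithR c : (forall x, Phi (x * c) = 0) -> c = 0.
Proof.
move=> hc.
rewrite -(counit_r hH c).
apply: (@LA_thm R H H H (fun _ => True) Tphi (fun u w => eps w *: u)) => //.
- by move=> *; apply: Tphi_lin.
- by move=> w a u u' _ _; rewrite scalerDr !scalerA mulrC.
- by move=> u /=; linsolve.
- move=> u w _ hw; rewrite epsN ?scale0r // => x.
  exact: (hw (fun w => Phi (x * w)) (ex_intro _ x erefl)).
- exact: kerN_sw.
Qed.

Lemma Phi_sw h (g : H -> H -> H) : Phi (sw h g) = sw h (fun a b => (Phi (g a b) : C^o)).
Proof. exact: (sw_f Delta g h (linPhi hH)). Qed.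
Lemma eps_sw h (g : H -> H -> H) : eps (sw h g) = sw h (fun a b => (eps (g a b) : C^o)).
Proof. exact: (sw_f Delta g h (lineps hH)). Qed.
Lemma S_sw h (g : H -> H -> H) : S (sw h g) = sw h (fun a b => S (g a b)).
Proof. exact: (sw_f Delta g h (linS hH)). Qed.
Lemma Sinv_sw h (g : H -> H -> H) : Sinv (sw h g) = sw h (fun a b => Sinv (g a b)).
Proof. exact: (sw_f Delta g h (linSinv hH)). Qed.
Lemma mull_sw c h (g : H -> H -> H) : c * sw h g = sw h (fun a b => c * g a b).
Proof. have l : linear (fun y : H => c * y) by linsolve. exact: (sw_f Delta g h l). Qed.
Lemma mulr_sw c h (g : H -> H -> H) : sw h g * c = sw h (fun a b => g a b * c).
Proof. have l : linear (fun y : H => y * c) by linsolve. exact: (sw_f Delta g h l). Qed.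
Lemma PhiZ k y : Phi (k *: y) = k * Phi y.
Proof. exact: (linZ _ _ (linPhi hH)). Qed.
Lemma epsZ k y : eps (k *: y) = k * eps y.
Proof. exact: (linZ _ _ (lineps hH)). Qed.
Lemma PhiB x y : Phi (x - y) = Phi x - Phi y.
Proof. exact: (linB _ _ (linPhi hH)). Qed.
Lemma PhiD x y : Phi (x + y) = Phi x + Phi y.
Proof. exact: (linD _ _ (linPhi hH)). Qed.

Lemma PhiSinv x : Phi (Sinv x) = Phi x.
Proof.
pose T := sw x (fun b1 b2 => Phi (Sinv b1) *: b2).
have key : T = Phi x *: 1.
  apply/eqP; rewrite -subr_eq0; apply/eqP; apply: faithR => a.
  have e1 : Phi (a * T) = Phi a * Phi x.
    transitivity (Phi (sw x (fun b1 b2 => Phi (a * b2) *: Sinv b1))).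
      rewrite /T mull_sw !Phi_sw; apply: sw_ext => b1 b2 /=.
      by rewrite -scalerAr !PhiZ mulrC.
    rewrite -(strong2 hH) Phi_sw.
    transitivity (Phi (sw a (fun a1 a2 => Phi a1 *: (a2 * x)))).
      by rewrite Phi_sw; apply: sw_ext => a1 a2 /=; rewrite !PhiZ mulrC.
    by rewrite (PhiinvL hH (f := fun y => y * x)) ?mul1r ?PhiZ //; linsolve.
  by rewrite mulrBr PhiB e1 mulr_algr PhiZ mulrC subrr.
have := congr1 eps key; rewrite epsZ (eps_one hH) mulr1 => <-.
rewrite /T eps_sw.
transitivity (Phi (Sinv (sw x (fun b1 b2 => eps b2 *: b1)))); first by rewrite /swd (counit_r hH).
rewrite Sinv_sw Phi_sw; apply: sw_ext => b1 b2 /=.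
by rewrite (linZ _ _ (linSinv hH)) PhiZ epsZ mulrC.
Qed.

Lemma PhiS x : Phi (S x) = Phi x.
Proof. by rewrite -PhiSinv (SK hH). Qed.

End Hopf5.


Lemma quad_real (R : realType) (e d : R) : (forall r : R, 0 <= r * e + r ^+ 2 * d) -> e = 0.
Proof.
move=> h.
have h1 := h 1; have h2 := h (-1).
have d0 : 0 <= d by nra.
pose r := - e / (1 + d).
have hr : r * (1 + d) = - e by rewrite /r mulrVK // unitfE; lra.
have he : e = - (r * (1 + d)) by rewrite hr opprK.
have hrr := h r; rewrite he in hrr.
have r0 : r = 0 by nra.
by rewrite he r0 mul0r oppr0.
Qed.

Lemma quad (R : realType) (E D : R[i]) :
  (forall r : R, 0 <= r%:C * E + (r%:C) ^+ 2 * D) -> E = 0.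
Proof.
case: E => e1 e2; case: D => d1 d2 h.
have hc : forall r : R, r * e2 + r ^+ 2 * d2 = 0 /\ 0 <= r * e1 + r ^+ 2 * d1.
  move=> r; have := h r; rewrite lecE /= => /andP [/eqP h1 h2].
  split; last by move: h2; rewrite !mul0r !subr0 !expr2 /=; simpc.
  by move: h1; simpc.
have e2z : e2 = 0.
  have [a1 _] := hc 1; have [a2 _] := hc (-1).
  by move: a1 a2; rewrite !expr2; lra.
have e1z : e1 = 0 by apply: (quad_real (d := d1)) => r; case: (hc r).
by rewrite e1z e2z.
Qed.


Section Hopf6.
Variable R : realType.
Local Notation C := R[i].
Variable H : algType C.
Variables (Delta : H -> seq (H * H)) (eps : H -> C) (S Sinv star : H -> H) (Phi : H -> C).
Hypothesis hH : is_CQG_Hopf_star Delta eps S Sinv star Phi.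
Implicit Types U V : lmodType C.
Local Notation sw := (swd Delta).
Ltac linsolve := linsolve_with hH.

Hypothesis hs : forall h x, sw h (fun a b => (Phi (Sinv b * x * a) : C^o)) = eps h * Phi x.

Lemma sharp1 y b : Phi (Sinv (Sinv y) * b) = Phi (b * y).
Proof.
transitivity (sw y (fun y1 y2 => sw y1 (fun c d => (Phi (Sinv d * (Sinv (Sinv y2) * b) * c) : C^o)))).
  symmetry; transitivity (sw y (fun y1 y2 => eps y1 *: (Phi (Sinv (Sinv y2) * b) : C^o))).
    by apply: sw_ext => y1 y2 /=; exact: hs.
  by rewrite (counitL hH (f := fun y2 => (Phi (Sinv (Sinv y2) * b) : C^o))) //; linsolve.
rewrite (sw_coassoc hH (g := fun c d e => (Phi (Sinv d * (Sinv (Sinv e) * b) * c) : C^o))); last by linsolve.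
transitivity (sw y (fun z1 w => eps w *: (Phi (b * z1) : C^o))).
  apply: sw_ext => z1 w /=.
  transitivity (sw w (fun z2 z3 => (fun u => (Phi (Sinv u * b * z1) : C^o)) (Sinv z3 * z2))).
    by swext; rewrite (Sinv_mul hH) !mulrA.
  rewrite (antipodeInvR hH (f := fun u => (Phi (Sinv u * b * z1) : C^o))); last by linsolve.
  by rewrite (Sinv1 hH) mul1r.
by rewrite (counitR hH (f := fun z1 => (Phi (b * z1) : C^o))) //; linsolve.
Qed.

Lemma sharp2 a b : Phi (a * b) = Phi (b * S (S a)).
Proof. by rewrite -[RHS]sharp1 !(SK hH). Qed.

Lemma S4 y : S (S (S (S y))) = y.
Proof.
apply/eqP; rewrite eq_sym -subr_eq0; apply/eqP; apply: (faithR hH) => x.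
rewrite mulrBr (PhiB hH); apply/eqP; rewrite subr_eq0; apply/eqP.
by rewrite -[LHS](PhiS hH) (S_mul hH) [LHS]sharp2 -(S_mul hH) (PhiS hH) [LHS]sharp2.
Qed.

Lemma conjE (x : C) : Num.conj x = conjc x.
Proof. by []. Qed.

Lemma conj1 : Num.conj (1 : C) = 1.
Proof. by rewrite conjE; apply/eqP; rewrite eq_complex /= oppr0 !eqxx. Qed.

Lemma starD x y : star (x + y) = star x + star y.
Proof. by have := star_antilin hH 1 x y; rewrite conj1 !scale1r. Qed.

Lemma star0 : star 0 = 0.
Proof.
have := starD 0 0; rewrite addr0 => h.
by apply: (addrI (star 0)); rewrite addr0 -h.
Qed.

Lemma starZ t x : star (t *: x) = Num.conj t *: star x.
Proof. by rewrite -[t *: x]addr0 (star_antilin hH) star0 addr0. Qed.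

Lemma expand (z w : H) (t : C) :
  Phi (star (t *: w + z) * (t *: w + z)) =
  Num.conj t * t * Phi (star w * w) + Num.conj t * Phi (star w * z) + t * Phi (star z * w) + Phi (star z * z).
Proof.
rewrite starD starZ mulrDl !mulrDr.
rewrite -![in LHS]scalerAl -![in LHS]scalerAr ![in LHS](PhiD hH) ![in LHS](PhiZ hH).
ring.
Qed.

Lemma polar_real z : Phi (star z * z) = 0 -> forall w, Phi (star z * w) + Phi (star w * z) = 0.
Proof.
move=> hz w; apply: (quad (D := Phi (star w * w))) => r.
have := Phi_pos hH (r%:C *: w + z); rewrite expand hz conjE conjc_real addr0.
suff -> : r%:C * r%:C * Phi (star w * w) + r%:C * Phi (star w * z) + r%:C * Phi (star z * w) =
  r%:C * (Phi (star z * w) + Phi (star w * z)) + r%:C ^+ 2 * Phi (star w * w) by [].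
by rewrite expr2; ring.
Qed.

Lemma conj_i : Num.conj ('i%C : C) = - 'i%C.
Proof. by rewrite conjE; apply/eqP; rewrite eq_complex /= oppr0 !eqxx. Qed.

Lemma polar z : Phi (star z * z) = 0 -> forall w, Phi (star z * w) = 0.
Proof.
move=> hz w.
have h1 := polar_real hz w; have h2 := polar_real hz ('i%C *: w).
rewrite starZ -scalerAl -scalerAr !(PhiZ hH) conj_i in h2.
have eAB : Phi (star z * w) = Phi (star w * z).
  have : 'i%C * (Phi (star z * w) - Phi (star w * z)) = 0.
    by rewrite -h2; ring.
  move/eqP; rewrite mulf_eq0 => /orP [/eqP hi|]; last by rewrite subr_eq0 => /eqP.
  by move: hi => /eqP; rewrite eq_complex /= oner_eq0 andbF.
rewrite -eAB in h1; move/eqP: h1; rewrite -mulr2n mulrn_eq0 /=.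
by move/eqP.
Qed.

Lemma Kid y : S (S y) = y.
Proof.
pose z := S (S y) - y.
have Kz : S (S z) = - z.
  by rewrite /z !(linB _ _ (linS hH)) S4 opprB.
have e1 : Phi (z * star z) = - Phi (star z * z).
  by rewrite sharp2 Kz mulrN -(linN _ (linPhi hH)).
have p1 := Phi_pos hH z.
have p2 := Phi_pos hH (star z); rewrite (star_invol hH) e1 oppr_ge0 in p2.
have hz : Phi (star z * z) = 0 by apply/eqP; rewrite Order.POrderTheory.eq_le p2 p1.
have hw := polar hz.
have sz : S (S (star z)) = 0.
  apply: (faithR hH) => x; by rewrite -sharp2 hw.
have sz0 : star z = 0 by rewrite -[star z]S4 sz !(lin0 (linS hH)).
have z0 : z = 0 by rewrite -[z](star_invol hH) sz0 star0.
by apply/eqP; rewrite -subr_eq0 -/z z0.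
Qed.

Lemma trace_of_sharp : tracial Phi.
Proof. by move=> a b; rewrite sharp2 Kid. Qed.

End Hopf6.


Section Hopf7.
Variable R : realType.
Local Notation C := R[i].
Variable H : algType C.
Variables (Delta : H -> seq (H * H)) (eps : H -> C) (S Sinv star : H -> H) (Phi : H -> C).
Hypothesis hH : is_CQG_Hopf_star Delta eps S Sinv star Phi.
Implicit Types U V : lmodType C.
Local Notation sw := (swd Delta).
Ltac linsolve := linsolve_with hH.

Lemma strong3 a b :
  sw a (fun a1 a2 => Phi (b * a1) *: a2) = sw b (fun b1 b2 => Phi (b1 * a) *: Sinv b2).
Proof.
symmetry.
transitivity (sw b (fun b1 b2 => sw (b1 * a) (fun p q => Phi p *: (Sinv b2 * q)))).
  apply: sw_ext => b1 b2 /=.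
  by rewrite (PhiinvL hH (f := fun q => Sinv b2 * q)) ?mulr1 //; linsolve.
transitivity (sw b (fun b1 b2 => sw b1 (fun x y => sw a (fun a1 a2 => Phi (x * a1) *: (Sinv b2 * (y * a2)))))).
  apply: sw_ext => b1 b2 /=.
  by rewrite (sw_mul hH (g := fun p q => Phi p *: (Sinv b2 * q))) //; linsolve.
rewrite (sw_coassoc hH (g := fun x y b2 => sw a (fun a1 a2 => Phi (x * a1) *: (Sinv b2 * (y * a2))))); last by linsolve.
transitivity (sw b (fun x w => eps w *: sw a (fun a1 a2 => Phi (x * a1) *: a2))).
  apply: sw_ext => x w /=.
  transitivity (sw w (fun y b2 => (fun z => sw a (fun a1 a2 => Phi (x * a1) *: (z * a2))) (Sinv b2 * y))).
    by swext; rewrite mulrA.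
  rewrite (antipodeInvR hH (f := fun z => sw a (fun a1 a2 => Phi (x * a1) *: (z * a2)))); last by linsolve.
  by congr (_ *: _); swext; rewrite mul1r.
by rewrite (counitR hH (f := fun x => sw a (fun a1 a2 => Phi (x * a1) *: a2))) //; linsolve.
Qed.

Hypothesis htr : tracial Phi.

Lemma S_Sinv y : S y = Sinv y.
Proof.
have e : \sum_(p <- [seq (S q.1 - Sinv q.1, q.2) | q <- Delta y]) eps p.2 *: p.1 = 0.
  apply: (@LA_thm R H H H (fun _ => True) (Tphi Phi) (fun u w => eps w *: u)) => //.
  - by move=> *; apply: (Tphi_lin hH).
  - by move=> w a u u' _ _; rewrite scalerDr !scalerA mulrC.
  - by move=> u /=; linsolve.
  - move=> u w _ hw; rewrite (faithR hH (c := w)) ?(lin0 (lineps hH)) ?scale0r // => x.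
    exact: (hw (fun w => Phi (x * w)) (ex_intro _ x erefl)).
  - move=> t [c ->]; rewrite big_map /=.
    have e : \sum_(p <- Delta y) Phi (p.2 * c) *: S p.1 = \sum_(p <- Delta y) Phi (p.2 * c) *: Sinv p.1.
      have e1 := strong1 hH y c; have e2 := strong2 hH c y; rewrite /swd in e1 e2.
      rewrite -e1; transitivity (\sum_(p <- Delta c) Phi (p.2 * y) *: p.1).
        by apply: eq_bigr => p _; rewrite htr.
      by rewrite e2; apply: eq_bigr => p _; rewrite htr.
    transitivity (\sum_(p <- Delta y) Phi (p.2 * c) *: S p.1 - \sum_(p <- Delta y) Phi (p.2 * c) *: Sinv p.1).
      by rewrite -sumrB; apply: eq_bigr => p _; rewrite htr scalerBr.
    by apply/eqP; rewrite subr_eq0; apply/eqP; rewrite e.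
move: e; rewrite big_map /=.
have -> : \sum_(i <- Delta y) eps i.2 *: (S i.1 - Sinv i.1) = sw y (fun a b => eps b *: (S a - Sinv a)) by [].
rewrite (counitR hH (f := fun a => S a - Sinv a)); last by linsolve.
by move/eqP; rewrite subr_eq0 => /eqP.
Qed.

Lemma SS y : S (S y) = y.
Proof. by rewrite [S y]S_Sinv (SinvK hH). Qed.

Definition Ff (k : H) : Hfun H := fun x => Phi (S k * x).

Lemma Ff_inI k : inI Phi (Ff k).
Proof. by exists (S k). Qed.

Lemma Ff_lin a h k : Ff (a *: h + k) = a *: Ff h + Ff k.
Proof.
apply/funext => x; rewrite /Ff (S_lin hH) mulrDl -scalerAl (PhiD hH) (PhiZ hH).
by [].
Qed.

Lemma linFf : linear Ff.
Proof. by move=> a h k; rewrite Ff_lin. Qed.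

Lemma Ff_inj : injective Ff.
Proof.
move=> k k' e; apply: (can_inj (SK hH)); apply/eqP; rewrite -subr_eq0; apply/eqP.
apply: (faithR hH) => x; rewrite mulrBr (PhiB hH) [Phi (x * S k)]htr [Phi (x * S k')]htr.
by have := congr1 (fun f => f x) e; rewrite /Ff => ->; rewrite subrr.
Qed.

Lemma inI_Ff w : inI Phi w -> exists k, w = Ff k.
Proof. by move=> [a ->]; exists (S a); rewrite /Ff SS. Qed.

Lemma Ff_mod h k : Ff (actH Delta Sinv h k) = actI Delta Sinv h (Ff k).
Proof.
apply/funext => x; rewrite /actI /Ff.
have -> : actH Delta Sinv h k = sw h (fun a b => b * k * Sinv a) by [].
rewrite (S_sw hH) (mulr_sw Delta) (Phi_sw hH) /swd; apply: eq_bigr => p _.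
rewrite (S_mul hH) (SinvK hH) (S_mul hH) !S_Sinv.
by rewrite !mulrA [RHS]htr !mulrA.
Qed.

Lemma conv_Ff h c : conv Delta (fun w => Phi (c * w)) (Ff h) = \sum_(p <- Delta h) Phi (c * p.2) *: Ff p.1.
Proof.
apply/funext => x; rewrite fct_sumE /conv /Ff.
transitivity (sw c (fun c1 c2 => (Phi (c1 * x) * Phi (c2 * h) : C^o))).
  transitivity (Phi (S h * sw x (fun x1 x2 => Phi (c * x1) *: x2))).
    rewrite (mull_sw Delta) (Phi_sw hH) /swd; apply: eq_bigr => p _.
    by rewrite -scalerAr (PhiZ hH).
  rewrite strong3 (mull_sw Delta) (Phi_sw hH); apply: sw_ext => c1 c2 /=.
  by rewrite -scalerAr (PhiZ hH) -[Sinv c2]S_Sinv -(S_mul hH) (PhiS hH).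
symmetry.
transitivity (Phi (S (sw h (fun h1 h2 => Phi (c * h2) *: h1)) * x)).
  rewrite (S_sw hH) (mulr_sw Delta) (Phi_sw hH) /swd; apply: eq_bigr => p _.
  by rewrite (linZ _ _ (linS hH)) -scalerAl (PhiZ hH).
rewrite (strong1 hH) (S_sw hH) (mulr_sw Delta) (Phi_sw hH); apply: sw_ext => c1 c2 /=.
by rewrite (linZ _ _ (linS hH)) -scalerAl (PhiZ hH) SS mulrC.
Qed.

Variable deltaI : Hfun H -> seq (Hfun H * H).
Hypothesis hdI : is_deltaI Delta Phi deltaI.

Lemma inI0 : inI Phi 0.
Proof. by exists 0; apply/funext => x; rewrite mul0r (lin0 (linPhi hH)). Qed.

Lemma inIC a u u' : inI Phi u -> inI Phi u' -> inI Phi (a *: u + u').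
Proof.
move=> [b ->] [b' ->]; exists (a *: b + b'); apply/funext => x.
by rewrite mulrDl -scalerAl (PhiD hH) (PhiZ hH).
Qed.

Lemma co_aux h U (B : Hfun H -> H -> U) :
  (forall w a u u', inI Phi u -> inI Phi u' -> B (a *: u + u') w = a *: B u w + B u' w) ->
  (forall u, linear (B u)) ->
  \sum_(p <- deltaI (Ff h)) B p.1 p.2 = \sum_(p <- Delta h) B (Ff p.1) p.2.
Proof.
move=> hB1 hB2.
have B0 : forall w, B 0 w = 0.
  move=> w; have := hB1 w 1 0 0 inI0 inI0; rewrite !scale1r addr0 => e.
  by apply: (addrI (B 0 w)); rewrite addr0 -e.
have BN : forall u w, inI Phi u -> B (- u) w = - B u w.
  move=> u w Iu; have := hB1 w (-1) u 0 Iu inI0.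
  by rewrite addr0 B0 addr0 !scaleN1r.
have e : \sum_(p <- deltaI (Ff h) ++ [seq (- Ff q.1, q.2) | q <- Delta h]) B p.1 p.2 = 0.
  apply: (@LA_thm R (Hfun H) H U (inI Phi) (Tphi Phi) B) => //.
  - exact: inI0.
  - exact: inIC.
  - by move=> *; apply: (Tphi_lin hH).
  - move=> u w _ hw; rewrite (faithR hH (c := w)) ?(lin0 (hB2 u)) // => x.
    exact: (hw (fun w => Phi (x * w)) (ex_intro _ x erefl)).
  - move=> p Hp; case: (List.in_app_or _ _ _ Hp) => {}Hp.
      by apply: ((hdI (Ff_inI h)).1).
    case: (proj1 (List.in_map_iff _ _ _) Hp) => q [<- _].
    by rewrite /= -scaleN1r -[_ *: _]addr0; apply: inIC; [apply: Ff_inI | apply: inI0].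
  - move=> t [c ->]; rewrite big_cat /= big_map /=.
    rewrite -((hdI (Ff_inI h)).2 (fun w => Phi (c * w))); last by exists c.
    rewrite conv_Ff -big_split /= big1 // => p _.
    by rewrite scalerN subrr.
move: e; rewrite big_cat big_map /=.
rewrite (eq_bigr (fun p => - B (Ff p.1) p.2)); last by move=> p _; rewrite BN //; apply: Ff_inI.
by rewrite sumrN => /eqP; rewrite subr_eq0 => /eqP.
Qed.

Lemma Ff_co h : teq (deltaI (Ff h)) [seq (Ff p.1, p.2) | p <- Delta h].
Proof.
move=> U B [bl br]; rewrite /tsum big_map /=.
apply: co_aux => //.
by move=> w a u u' _ _; rewrite (br w).
Qed.

Definition Gf (w : Hfun H) : H :=
  match pselect (exists k, Ff k = w) with
  | left e => projT1 (cid e)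
  | right _ => 0
  end.

Lemma GfF k : Gf (Ff k) = k.
Proof.
rewrite /Gf; case: pselect => [e|n]; last by exfalso; apply: n; exists k.
by apply: Ff_inj; rewrite (projT2 (cid e)).
Qed.

Lemma FGf w : inI Phi w -> Ff (Gf w) = w.
Proof. by move=> /inI_Ff [k ->]; rewrite GfF. Qed.

Lemma Gf_lin a w1 w2 : inI Phi w1 -> inI Phi w2 -> Gf (a *: w1 + w2) = a *: Gf w1 + Gf w2.
Proof. by move=> /inI_Ff [k1 ->] /inI_Ff [k2 ->]; rewrite -Ff_lin !GfF. Qed.

Lemma Gf_mod h w : inI Phi w -> Gf (actI Delta Sinv h w) = actH Delta Sinv h (Gf w).
Proof. by move=> /inI_Ff [k ->]; rewrite -Ff_mod !GfF. Qed.

Lemma Gf_co w : inI Phi w -> teq (Delta (Gf w)) [seq (Gf p.1, p.2) | p <- deltaI w].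
Proof.
move=> /inI_Ff [k ->]; rewrite GfF => U B [bl br]; rewrite /tsum big_map /=.
rewrite (co_aux k (B := fun u w => B (Gf u) w)) /=.
- by apply: eq_bigr => p _; rewrite GfF.
- by move=> w0 a u u' Iu Iu'; rewrite Gf_lin // br.
- by move=> u; apply: bl.
Qed.

Lemma iso_of_trace : YD_isomorphic Delta Sinv Phi deltaI.
Proof.
exists Ff, Gf; split.
- split.
  + exact: Ff_inI.
  + exact: Ff_lin.
  + exact: Ff_mod.
  + exact: Ff_co.
- split.
  + exact: Gf_lin.
  + exact: Gf_mod.
  + exact: Gf_co.
- exact: GfF.
- exact: FGf.
Qed.

End Hopf7.


Section Main.
Variable R : realType.
Local Notation C := R[i].
Variable H : algType C.
Variables (Delta : H -> seq (H * H)) (eps : H -> C) (S Sinv star : H -> H) (Phi : H -> C).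
Hypothesis hH : is_CQG_Hopf_star Delta eps S Sinv star Phi.
Implicit Types U V : lmodType C.
Local Notation sw := (swd Delta).
Ltac linsolve := linsolve_with hH.
Variable deltaI : Hfun H -> seq (Hfun H * H).
Hypothesis hdI : is_deltaI Delta Phi deltaI.

Lemma trace_of_iso : YD_isomorphic Delta Sinv Phi deltaI -> tracial Phi.
Proof.
move=> [F [G [[FI Flin Fmod Fco] [Glin Gmod Gco] GF FG]]].
have lF : linear F by move=> a h k; rewrite Flin.
pose om := F 1.
have [a0 ea0] := FI 1.
have om_lin : linear (om : H -> C^o) by rewrite /om ea0; linsolve.
have inIPhi : inI Phi (Phi : Hfun H) by exists 1; apply/funext => x; rewrite mul1r.
have e1 := (hdI (FI 1)).2 _ inIPhi.
have e2 : \sum_(p <- deltaI om) Phi p.2 *: p.1 = om.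
  have bB : bilinear_map (fun (u : Hfun H) (w : H) => Phi w *: u) by linsolve.
  have := Fco 1 _ _ bB; rewrite /tsum big_map /= -/om => ->.
  have -> : \sum_(p <- Delta 1) Phi p.2 *: F p.1 = sw 1 (fun a b => Phi b *: F a) by [].
  by rewrite (sw_one hH) ?(Phi_one hH) ?scale1r //; linsolve.
have e3 : forall x, om x = Phi x * om 1.
  move=> x; have := congr1 (fun f => f x) (etrans e1 e2); rewrite /conv /= => <-.
  transitivity (om (sw x (fun a b => Phi a *: b))); last first.
    by rewrite (PhiinvL hH (f := id)) // (linZ _ _ om_lin).
  rewrite (sw_f Delta _ _ om_lin) /swd; apply: eq_bigr => p _.
  by rewrite (linZ _ _ om_lin).
have c0 : om 1 != 0.
  apply/negP => /eqP c0.
  have om0 : om = 0 by apply/funext => x; rewrite e3 c0 mulr0.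
  have G0 : G 0 = 0.
    have := Glin 1 0 0 (inI0 hH) (inI0 hH); rewrite !scale1r addr0 => e.
    by apply: (addrI (G 0)); rewrite addr0 -e.
  have := GF 1; rewrite -/om om0 G0 => e10.
  have := Phi_one hH; rewrite -e10 (lin0 (linPhi hH)) => /eqP.
  by rewrite eq_sym oner_eq0.
apply: (trace_of_sharp hH) => h x.
have := congr1 (fun f => f x) (Fmod h 1).
have -> : actH Delta Sinv h 1 = eps h *: 1.
  have -> : actH Delta Sinv h 1 = sw h (fun a b => (fun y => y) (b * Sinv a)) by rewrite /actH /swd; apply: eq_bigr => p _; rewrite mulr1.
  by rewrite (antipodeInvL hH (f := fun y => y)).
rewrite (linZ _ _ lF) -/om /actI /= => e.
have e' : eps h * om x = \sum_(p <- Delta h) om (Sinv p.2 * x * p.1) := e.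
apply: (mulIf c0); rewrite -mulrA -e3 e' /swd mulr_suml.
by apply: eq_bigr => p _; rewrite [RHS]e3.
Qed.

End Main.

Theorem mainTheorem8 (R : realType) (H : algType R[i])
  (Delta : H -> seq (H * H)) (eps : H -> R[i]) (S Sinv star : H -> H)
  (Phi : H -> R[i])
  (hH : is_CQG_Hopf_star Delta eps S Sinv star Phi)
  (deltaI : Hfun H -> seq (Hfun H * H))
  (hdI : is_deltaI Delta Phi deltaI) :
  YD_isomorphic Delta Sinv Phi deltaI <-> tracial Phi.
Proof.
split; first exact: (trace_of_iso hH hdI).
by move=> htr; apply: (iso_of_trace hH htr hdI).
Qed.
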